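(* Let $k>1$, let $F=F(a_1,\dots,a_k)$ and $A_{2k}=\{a_1^{\pm1},\dots,a_k^{\pm1}\}$. Let $c\ge 1$ and let $Z$ be the set of all cyclically reduced words $x$ over $A_{2k}$ such that \[ C_{2k}(x)\ge -\frac{c}{2}+|x|\frac{\log_2(2k-1)}{2}. \] Then there exists $n_0>1$ such that for every $n\ge n_0$, \[ \frac{\gamma(n,Z)}{\gamma(n,CR)}\ge 1-\frac{1}{2^c}. \]
   Context: $CR$ denotes the set of all cyclically reduced words over $A_{2k}$ (viewed as elements of $F$), and for $S\subseteq F$, $\gamma(n,S)$ is the number of $x\in S$ with $|x|=n$. Kolmogorov complexity: fix a universal Turing machine computing a universal partial recursive function $\phi:\{0,1\}^\ast\to\{0,1\}^\ast$, and for $x\in\{0,1\}^\ast$ let $C(x)=\min\{|p|:\phi(p)=x\}$. Fix a recursive bijection $h:A_{2k}^\ast\to\{0,1\}^\ast$ and for $x\in A_{2k}^\ast$ let $C_{2k}(x)=C(h(x))$. *)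

(* Defs.v *)
From mathcomp Require Import all_boot.
From Stdlib Require Import Reals ClassicalEpsilon.

Set Implicit Arguments.
Unset Strict Implicit.
Unset Printing Implicit Defensive.

Inductive rterm : Type :=
| RZero : rterm
| RSucc : rterm
| RProj : nat -> rterm
| RComp : rterm -> list rterm -> rterm
| RPrim : rterm -> rterm -> rterm
| RMu   : rterm -> rterm.

Inductive reval : rterm -> seq nat -> nat -> Prop :=
| reZero v : reval RZero v 0
| reSucc x : reval RSucc [:: x] x.+1
| reProj i v : i < size v -> reval (RProj i) v (nth 0 v i)
| reComp f gs v ys y : revals gs v ys -> reval f ys y -> reval (RComp f gs) v y
| rePrim0 f g v y : reval f v y -> reval (RPrim f g) (0 :: v) y
| rePrimS f g n v r y : reval (RPrim f g) (n :: v) r ->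
    reval g (n :: r :: v) y -> reval (RPrim f g) (n.+1 :: v) y
| reMu f v n : reval f (n :: v) 0 ->
    (forall m, m < n -> exists y, reval f (m :: v) y.+1) -> reval (RMu f) v n
with revals : list rterm -> seq nat -> seq nat -> Prop :=
| resNil v : revals [::] v [::]
| resCons g gs v y ys : reval g v y -> revals gs v ys -> revals (g :: gs) v (y :: ys).

Definition partial_recursive (psi : nat -> option nat) : Prop :=
  exists t : rterm, forall x y, reval t [:: x] y <-> psi x = Some y.

(* standard bijection {0,1}^* -> nat : s |-> (binary "1s") - 1 *)
Definition nat_of_bits (s : seq bool) : nat :=
  (foldl (fun acc (b : bool) => (acc.*2 + b)%N) 1 s).-1.

Definition partial_recursive_str (f : seq bool -> option (seq bool)) : Prop :=
  exists psi : nat -> option nat, partial_recursive psi /\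
    forall p, psi (nat_of_bits p) = omap nat_of_bits (f p).

(* self-delimiting pairing <e, p> := e with doubled bits, then 01, then p *)
Definition pair_bits (e p : seq bool) : seq bool :=
  flatten [seq [:: b; b] | b <- e] ++ [:: false; true] ++ p.

Definition universal_prf (phi : seq bool -> option (seq bool)) : Prop :=
  partial_recursive_str phi /\
  forall f, partial_recursive_str f ->
    exists e : seq bool, forall p, phi (pair_bits e p) = f p.

Definition pbool (P : Prop) : bool :=
  if excluded_middle_informative P then true else false.

Definition KC_pred (phi : seq bool -> option (seq bool)) (x : seq bool) : pred nat :=
  fun n => pbool (exists p, size p = n /\ phi p = Some x).

(* (the default value 0 never occurs for a universal phi) *)
Definition KC (phi : seq bool -> option (seq bool)) (x : seq bool) : nat :=
  match excluded_middle_informative (exists n, KC_pred phi x n) with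
  | left H => ex_minn H
  | right _ => 0
  end.

(* a letter (i, s) stands for a_{i+1} if s = false, a_{i+1}^{-1} if s = true *)
Definition letter (k : nat) : finType := ('I_k * bool)%type.
Definition word (k : nat) := seq (letter k).

Definition linv k (a : letter k) : letter k := (a.1, ~~ a.2).

Definition reduced_word k (w : word k) : bool :=
  let fix red (w : word k) : bool :=
    match w with
    | a :: ((b :: _) as t) => (b != linv a) && red t
    | _ => true
    end in red w.

Definition cyc_reduced k (w : word k) : bool :=
  reduced_word w &&
  match w with
  | [::] => true
  | a :: _ => last a w != linv a
  end.

Definition C2k k (phi : seq bool -> option (seq bool)) (h : word k -> seq bool)
  (x : word k) : nat := KC phi (h x).

Definition letter_code k (a : letter k) : nat := ((nat_of_ord a.1).*2 + a.2)%N.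
Definition word_code k (w : word k) : nat := CodeSeq.code (map (@letter_code k) w).

Definition recursive_bijection k (h : word k -> seq bool) : Prop :=
  bijective h /\
  exists psi : nat -> option nat, partial_recursive psi /\
    forall w, psi (word_code w) = Some (nat_of_bits (h w)).

Definition gamma k (n : nat) (S : word k -> Prop) : nat :=
  #|[set t : n.-tuple (letter k) | pbool (S (tval t))]|.

Definition CR k : word k -> Prop := fun w => cyc_reduced w.

Definition log2 (x : R) : R := (ln x / ln 2)%R.

Definition Zset k phi h (c : R) : word k -> Prop := fun x =>
  cyc_reduced x /\
  (INR (C2k phi h x) >= - c / 2 + INR (size x) * log2 (INR (2 * k - 1)) / 2)%R.

(* Main.v *)
Require Import Defs.
From mathcomp Require Import all_boot.
From Stdlib Require Import Reals.
From mathcomp Require Import zify.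
From Stdlib Require Import Lra ClassicalEpsilon ZArith.
Lemma pboolP (P : Prop) : pbool P = true <-> P.
Proof. rewrite /pbool; case: excluded_middle_informative => //; split => //. Qed.

Lemma id_prf : partial_recursive_str (fun p => Some p).
Proof.
exists (fun x => Some x); split; last by [].
exists (RProj 0) => x y; split.
- move=> H; inversion H; subst; by [].
- case=> <-; exact: (@reProj 0 [:: x]).
Qed.

Lemma KC_spec phi (hphi : universal_prf phi) x :
  exists p, size p = KC phi x /\ phi p = Some x.
Proof.
case: hphi => _ /(_ _ id_prf) [e He].
have Ex : exists n, KC_pred phi x n.
  exists (size (pair_bits e x)); apply/pboolP; exists (pair_bits e x); split => //.
rewrite /KC; case: excluded_middle_informative => [H|//].
case: ex_minnP => m /pboolP [p [Hp1 Hp2]] _; by exists p.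
Qed.

Lemma nseq_true_inj a b (s1 s2 : seq bool) :
  nseq a false ++ true :: s1 = nseq b false ++ true :: s2 -> s1 = s2.
Proof.
elim: a b => [|a IH] [|b] //=; first by case.
by case=> /IH.
Qed.

Lemma pos_cr k (w : word k) : all (fun a : letter k => ~~ a.2) w -> cyc_reduced w.
Proof.
move=> Hw; rewrite /cyc_reduced; apply/andP; split.
- elim: w Hw => [|a w IH] //= /andP [Ha Hw].
  case: w IH Hw => [|b w] //= IH /andP [Hb Hw'].
  apply/andP; split; last by apply: IH; rewrite /= Hb.
  apply/eqP => E; move: Hb; rewrite E /linv /=; by rewrite Ha.
- case: w Hw => [|a w] // Hw.
  have : last a (a :: w) \in a :: w by rewrite /= -/(last a (a :: w)) (mem_last a w).
  move/(allP Hw) => Hl; apply/eqP => E; move: Hl; rewrite E /linv /=.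
  by move: Hw => /= /andP [-> _].
Qed.
Lemma exp_le' x y : (x <= y)%R -> (exp x <= exp y)%R.
Proof. case/Rle_lt_or_eq_dec => [H|->]; [left; exact: exp_increasing | lra]. Qed.

Lemma INR_expn a b : INR (expn a b) = (INR a ^ b)%R.
Proof. elim: b => [|b IH] //. by rewrite expnS mult_INR IH. Qed.

Lemma nat_above r : exists N : nat, (r < INR N)%R /\ (0 <= r -> INR N <= r + 1)%R.
Proof.
case: (Rle_or_lt 0 r) => Hr.
- have [H1 H2] := archimed r.
  exists (Z.to_nat (up r)).
  have Hz : (0 <= up r)%Z by apply: le_IZR; lra.
  rewrite INR_IZR_INZ Z2Nat.id //; split => //; lra.
- exists 0%N; split => /=; lra.
Qed.

Theorem proposition3p3 (k : nat) (hk : 1 < k)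
  (phi : seq bool -> option (seq bool)) (hphi : universal_prf phi)
  (h : word k -> seq bool) (hh : recursive_bijection h)
  (c : R) (hc : (1 <= c)%R) :
  exists n0 : nat, 1 < n0 /\
    forall n : nat, n0 <= n ->
      (INR (gamma n (Zset phi h c)) / INR (gamma n (@CR k)) >= 1 - / Rpower 2 c)%R.
Proof.
have hinj : injective h by case: hh => /bij_inj.
have Hk2 : (2 <= INR k)%R by have := le_INR 2 k; rewrite /=; move=> H; apply: H; apply/leP.
set q := INR (2 * k - 1).
have Hq : q = (2 * INR k - 1)%R.
  rewrite /q; have E : (2 * k - 1 + 1 = 2 * k)%nat by lia.
  have := f_equal INR E; rewrite plus_INR mult_INR /=. move=> H; lra.
have Hln2 : (0 < ln 2)%R by rewrite -ln_1; apply: ln_increasing; lra.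
have Hlnq : (ln 2 <= ln q)%R.
  case: (Req_dec q 2) => [->|Hne]; first lra.
  left; apply: ln_increasing; lra.
set d := (2 * ln (INR k) - ln q)%R.
have Hd : (0 < d)%R.
  have E : ln (INR k * INR k) = (2 * ln (INR k))%R by rewrite ln_mult; lra.
  rewrite /d -E.
  have : (ln q < ln (INR k * INR k))%R by apply: ln_increasing; nra.
  lra.
have [n0 [Hn0 _]] := nat_above ((2 + c) * ln 2 / d + c + 2)%R.
have Hn0' : (0 <= (2 + c) * ln 2 / d)%R.
  apply: Rmult_le_pos; last by left; apply: Rinv_0_lt_compat.
  nra.
exists n0; split.
  apply/ltP; apply: INR_lt; rewrite /=; lra.
move=> n Hn.
have Hnr : (INR n0 <= INR n)%R by apply: le_INR; apply/leP.
set T := (- c / 2 + INR n * log2 q / 2)%R.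
have Hlog : (ln q = log2 q * ln 2)%R by rewrite /log2; field; lra.
have Hlog1 : (1 <= log2 q)%R.
  rewrite /log2; apply: (Rmult_le_reg_r (ln 2)) => //.
  rewrite Rmult_1_l /Rdiv Rmult_assoc Rinv_l; lra.
have HT : (0 <= T)%R by rewrite /T; nra.
have [M [HM1 /(_ HT) HM2]] := nat_above T.
set Bset := [set t : n.-tuple (letter k) |
   pbool (cyc_reduced (tval t) /\ (INR (C2k phi h (tval t)) < T)%R)].
have H1 : gamma n (@CR k) <= gamma n (Zset phi h c) + #|Bset|.
  rewrite /gamma.
  apply: (leq_trans (subset_leq_card (_ : _ \subset [set t : n.-tuple (letter k) | pbool (Zset phi h c t)] :|: Bset))); last exact: leq_card_setU.
  apply/subsetP => t; rewrite !inE => /pboolP Hcr; rewrite /CR in Hcr.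
  case: (Rlt_le_dec (INR (C2k phi h t)) T) => HC.
    by apply/orP; right; apply/pboolP; split.
  apply/orP; left; apply/pboolP; split => //; rewrite size_tuple; apply: Rle_ge; exact: HC.
have H2 : #|Bset| <= expn 2 M.
  have [g Hg] : exists g : seq bool -> seq bool, forall x, size (g x) = KC phi x /\ phi (g x) = Some x.
    exists (fun x => proj1_sig (constructive_indefinite_description _ (@KC_spec phi hphi x))).
    move=> x; exact: proj2_sig (constructive_indefinite_description _ (@KC_spec phi hphi x)).
  pose enc (p : seq bool) : M.-tuple bool :=
    insubd (nseq_tuple M false) (nseq (M - 1 - size p) false ++ true :: p).
  pose f (t : n.-tuple (letter k)) := enc (g (h (tval t))).
  have Hval : forall p, size p < M -> val (enc p) = nseq (M - 1 - size p) false ++ true :: p.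
    move=> p Hp; rewrite val_insubd size_cat size_nseq /= ifT //; apply/eqP; lia.
  have Hs : forall t : n.-tuple (letter k), (INR (C2k phi h t) < T)%R -> size (g (h t)) < M.
    move=> t Ht; rewrite (proj1 (Hg _)); apply/ltP; apply: INR_lt; rewrite /C2k in Ht; lra.
  rewrite -(card_in_imset (f:=f)).
    apply: leq_trans (max_card _) _; by rewrite card_tuple card_bool.
  move=> t1 t2; rewrite !inE => /pboolP [_ Hb1] /pboolP [_ Hb2] E.
  have E1 := congr1 val E; rewrite /f !Hval ?Hs // in E1.
  have E2 := @nseq_true_inj _ _ _ _ E1.
  have E3 : Some (h t1) = Some (h t2) by rewrite -(proj2 (Hg _)) -(proj2 (Hg (h t2))) E2.
  case: E3 => /hinj E4; exact: val_inj.
have H3 : expn k n <= gamma n (@CR k).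
  pose F (t : n.-tuple 'I_k) : n.-tuple (letter k) := map_tuple (fun i => (i, false) : letter k) t.
  have EF : #|[set F t | t in [set: n.-tuple 'I_k]]| = expn k n.
    rewrite card_imset ?cardsT ?card_tuple ?card_ord //.
    move=> t1 t2 /(congr1 val) /= /inj_map E; apply: val_inj; by apply: E => i j [->].
  rewrite -EF /gamma; apply: subset_leq_card; apply/subsetP => _ /imsetP [t _ ->].
  rewrite inE; apply/pboolP; apply: pos_cr; rewrite all_map; by apply/allP.
have R1 : (INR (gamma n (@CR k)) <= INR (gamma n (Zset phi h c)) + INR #|Bset|)%R.
  by rewrite -plus_INR; apply: le_INR; apply/leP.
have R2 : (INR #|Bset| <= Rpower 2 (T + 1))%R.
  apply: Rle_trans (_ : INR (expn 2 M) <= _)%R.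
    by apply: le_INR; apply/leP.
  rewrite INR_expn -Rpower_pow /=; last lra.
  apply: Rle_Rpower; lra.
have R3 : (Rpower (INR k) (INR n) <= INR (gamma n (@CR k)))%R.
  rewrite Rpower_pow; last lra.
  rewrite -INR_expn; apply: le_INR; apply/leP.
  exact: H3.
have Hnd : ((2 + c) * ln 2 <= INR n * d)%R.
  have E : ((2 + c) * ln 2 = (2 + c) * ln 2 / d * d)%R by field; lra.
  rewrite E; apply: Rmult_le_compat_r; lra.
have R4 : (Rpower 2 (T + 1) <= / Rpower 2 c * Rpower (INR k) (INR n))%R.
  rewrite -Rpower_Ropp /Rpower -exp_plus; apply: exp_le'.
  have E : ((T + 1) * ln 2 = - c / 2 * ln 2 + INR n * ln q / 2 + ln 2)%R.
    by rewrite /T Hlog; field.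
  rewrite E; rewrite /d in Hnd; lra.
have Hpos : (0 < Rpower (INR k) (INR n))%R by rewrite /Rpower; apply: exp_pos.
have HN : (0 < INR (gamma n (@CR k)))%R by lra.
set G := INR (gamma n (Zset phi h c)) in R1 *.
set N := INR (gamma n (@CR k)) in R1 R3 HN *.
set x := (/ Rpower 2 c)%R in R4 *.
apply: Rle_ge.
apply: (Rmult_le_reg_r N) => //.
rewrite /Rdiv Rmult_assoc Rinv_l; last lra.
have Hx : (0 <= x)%R by rewrite /x; left; apply: Rinv_0_lt_compat; rewrite /Rpower; apply: exp_pos.
nra.
Qed.
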